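(* (a) Suppose $a'>a>0$, $c>b>0$ and $\delta>0$. Then the function \[ x\mapsto {}_2F_1(a+\delta,b;c;x)\,{}_2F_1(a',b;c;x)-{}_2F_1(a'+\delta,b;c;x)\,{}_2F_1(a,b;c;x) \] has negative power series coefficients, starting with the coefficient at $x^2$. (b) Let $\delta>0$. The function $a\mapsto{}_2F_1(a,b;c;x)$ is log-convex, i.e. ${}_2F_1(a+\delta,b;c;x)^2\le {}_2F_1(a,b;c;x)\,{}_2F_1(a+2\delta,b;c;x)$, on $(-\infty,\infty)$ for $-\infty<x<1$ and $c>b>0$.
   Context: $(a)_k=a(a+1)\cdots(a+k-1)$ is the Pochhammer symbol; ${}_2F_1(a,b;c;x)=\sum_{k\ge0}\frac{(a)_k(b)_k}{(c)_k k!}x^k$ (for $x<0$ understood via analytic continuation). *)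

(* Defs.v *)
From Stdlib Require Import Reals.
From Coquelicot Require Import Coquelicot.
Open Scope R_scope.

Fixpoint poch (a : R) (k : nat) : R :=
  match k with
  | O => 1
  | S k' => poch a k' * (a + INR k')
  end.

Definition hyp_coef (a b c : R) (k : nat) : R :=
  poch a k * poch b k / (poch c k * INR (Factorial.fact k)).

(* The defining power series (meaningful for |x| < 1). *)
Definition hyp_series (a b c x : R) : R :=
  Series (fun k => hyp_coef a b c k * x ^ k).

(* 2F1 on (-oo,1): the power series on (-1,1), and for x <= -1 the analytic
   continuation given by Pfaff's transformation
   2F1(a,b;c;x) = (1-x)^(-b) 2F1(c-a,b;c;x/(x-1)), where x/(x-1) in [1/2,1). *)
Definition F21 (a b c x : R) : R :=
  if Rlt_dec (Rabs x) 1 then hyp_series a b c x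
  else Rpower (1 - x) (- b) * hyp_series (c - a) b c (x / (x - 1)).

Definition cauchy_coef (A B : nat -> R) (n : nat) : R :=
  sum_f_R0 (fun k => A k * B (n - k)%nat) n.

Definition diff_coef (a a' b c d : R) (n : nat) : R :=
  cauchy_coef (hyp_coef (a + d) b c) (hyp_coef a' b c) n
  - cauchy_coef (hyp_coef (a' + d) b c) (hyp_coef a b c) n.

(* Main.v *)
Require Import Defs.
From Stdlib Require Import Reals Lra Lia Psatz Factorial.
From Coquelicot Require Import Coquelicot.
Open Scope R_scope.

Definition A (x : R) (k : nat) : R := poch x k / INR (fact k).
Definition mm (b c : R) (k : nat) : R := poch b k / poch c k.

Lemma poch_pos x k : 0 < x -> 0 < poch x k.
Proof. intro Hx; induction k; simpl. lra. apply Rmult_lt_0_compat; auto. pose proof (pos_INR k); lra. Qed.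

Lemma INR_fact_pos k : 0 < INR (fact k).
Proof. apply lt_0_INR, lt_O_fact. Qed.

Lemma A_pos x k : 0 < x -> 0 < A x k.
Proof. intro; unfold A; apply Rdiv_lt_0_compat; [apply poch_pos; auto| apply INR_fact_pos]. Qed.

Lemma A_0 x : A x 0 = 1.
Proof. unfold A; simpl; field. Qed.

Lemma A_S x k : A x (S k) = A x k * (x + INR k) / INR (S k).
Proof.
  unfold A. simpl poch. rewrite fact_simpl, mult_INR.
  pose proof (INR_fact_pos k). assert (0 < INR (S k)) by (apply lt_0_INR; lia).
  field; lra.
Qed.

Lemma A_S' x k : INR (S k) * A x (S k) = A x k * (x + INR k).
Proof. rewrite A_S. assert (0 < INR (S k)) by (apply lt_0_INR; lia). field; lra. Qed.

Lemma hyp_coef_A a b c k : 0 < c -> hyp_coef a b c k = A a k * mm b c k.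
Proof.
  intro Hc. unfold hyp_coef, A, mm. pose proof (poch_pos c k Hc). pose proof (INR_fact_pos k).
  field; lra.
Qed.

Lemma mm_pos b c k : 0 < b -> 0 < c -> 0 < mm b c k.
Proof. intros; unfold mm; apply Rdiv_lt_0_compat; apply poch_pos; auto. Qed.

Lemma mm_S b c k : 0 < c -> mm b c (S k) = mm b c k * ((b + INR k) / (c + INR k)).
Proof.
  intro Hc. unfold mm; simpl. pose proof (poch_pos c k Hc). pose proof (pos_INR k).
  field; lra.
Qed.

Lemma mm_0 b c : mm b c 0 = 1.
Proof. unfold mm; simpl; field. Qed.

Lemma ratio_mono (f g : nat -> R) :
  (forall k, 0 < f k) -> (forall k, 0 < g k) ->
  (forall k, f (S k) * g k <= g (S k) * f k) ->
  forall k, f k * g 0%nat <= f 0%nat * g k.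
Proof.
  intros Hf Hg H k. induction k. lra.
  pose proof (H k). pose proof (Hf k). pose proof (Hg k). pose proof (Hf 0%nat). pose proof (Hg 0%nat).
  pose proof (Hf (S k)). pose proof (Hg (S k)).
  apply Rmult_le_reg_r with (g k); auto.
  assert (f (S k) * g k * g 0%nat <= g (S k) * f k * g 0%nat) by (apply Rmult_le_compat_r; lra).
  assert (g (S k) * (f k * g 0%nat) <= g (S k) * (f 0%nat * g k)) by (apply Rmult_le_compat_l; lra).
  nra.
Qed.

Lemma ratio_mono_strict (f g : nat -> R) :
  (forall k, 0 < f k) -> (forall k, 0 < g k) ->
  (forall k, f (S k) * g k < g (S k) * f k) ->
  forall k, f (S k) * g 0%nat < f 0%nat * g (S k).
Proof.
  intros Hf Hg H k. induction k. specialize (H 0%nat). lra.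
  pose proof (H (S k)). pose proof (Hf (S k)). pose proof (Hg 0%nat). pose proof (Hg (S k)). pose proof (Hg (S (S k))).
  apply Rmult_lt_reg_r with (g (S k)); auto.
  assert (f (S (S k)) * g (S k) * g 0%nat < g (S (S k)) * f (S k) * g 0%nat) by (apply Rmult_lt_compat_r; lra).
  assert (g (S (S k)) * (f (S k) * g 0%nat) < g (S (S k)) * (f 0%nat * g (S k))) by (apply Rmult_lt_compat_l; lra).
  nra.
Qed.


Lemma frac_le b c u v : 0 < b -> b < c -> (u <= v)%nat ->
  (b + INR u) / (c + INR u) <= (b + INR v) / (c + INR v).
Proof.
  intros. apply le_INR in H1. pose proof (pos_INR u).
  apply Rmult_le_reg_r with ((c + INR u) * (c + INR v)). nra.
  field_simplify; try lra. nra.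
Qed.

Lemma frac_lt b c u v : 0 < b -> b < c -> (u < v)%nat ->
  (b + INR u) / (c + INR u) < (b + INR v) / (c + INR v).
Proof.
  intros. apply lt_INR in H1. pose proof (pos_INR u).
  apply Rmult_lt_reg_r with ((c + INR u) * (c + INR v)). nra.
  field_simplify; try lra. nra.
Qed.

Lemma E_nonneg a a' j q : 0 < a -> a < a' -> (j <= q)%nat ->
  A a q * A a' j <= A a j * A a' q.
Proof.
  intros Ha Ha' Hjq. replace q with (j + (q - j))%nat by lia.
  generalize (q - j)%nat as k. intro k.
  pose proof (ratio_mono (fun k => A a (j + k)) (fun k => A a' (j + k))) as R.
  simpl in R. rewrite Nat.add_0_r in R. apply R.
  - intro; apply A_pos; auto.
  - intro; apply A_pos; lra.
  - intro l. rewrite Nat.add_succ_r, !A_S. pose proof (A_pos a (j+l) Ha). pose proof (A_pos a' (j+l) ltac:(lra)).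
    assert (0 < / INR (S (j + l))) by (apply Rinv_0_lt_compat, lt_0_INR; lia).
    unfold Rdiv. set (X := A a (j+l)) in *. set (Y := A a' (j+l)) in *. set (s := / INR (S (j + l))) in *.
    assert (0 < X * Y * s) by (apply Rmult_lt_0_compat; [apply Rmult_lt_0_compat|]; assumption). nra.
Qed.

Lemma E_pos a a' k : 0 < a -> a < a' ->
  A a (S k) * A a' 0 < A a 0 * A a' (S k).
Proof.
  intros Ha Ha'.
  apply (ratio_mono_strict (A a) (A a')).
  - intro; apply A_pos; auto.
  - intro; apply A_pos; lra.
  - intro l. rewrite !A_S. pose proof (A_pos a l Ha). pose proof (A_pos a' l ltac:(lra)).
    assert (0 < / INR (S l)) by (apply Rinv_0_lt_compat, lt_0_INR; lia).
    unfold Rdiv. set (X := A a l) in *. set (Y := A a' l) in *. set (s := / INR (S l)) in *.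
    assert (0 < X * Y * s) by (apply Rmult_lt_0_compat; [apply Rmult_lt_0_compat|]; assumption). nra.
Qed.

Lemma m_mono b c i j q : 0 < b -> b < c -> (j <= q)%nat ->
  mm b c (j + i) * mm b c q <= mm b c j * mm b c (q + i).
Proof.
  intros Hb Hc Hjq.
  pose proof (ratio_mono (fun k => mm b c (j + k)) (fun k => mm b c (q + k))) as R.
  simpl in R. rewrite !Nat.add_0_r in R. apply R.
  - intro; apply mm_pos; lra.
  - intro; apply mm_pos; lra.
  - intro l. rewrite !Nat.add_succ_r, !mm_S by lra.
    pose proof (mm_pos b c (j+l) ltac:(lra) ltac:(lra)). pose proof (mm_pos b c (q+l) ltac:(lra) ltac:(lra)).
    pose proof (frac_le b c (j+l) (q+l) Hb Hc ltac:(lia)).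
    set (r1 := (b + INR (j + l)) / (c + INR (j + l))) in *.
    set (r2 := (b + INR (q + l)) / (c + INR (q + l))) in *.
    set (X := mm b c (j + l)) in *. set (Y := mm b c (q + l)) in *.
    assert (0 < X * Y) by (apply Rmult_lt_0_compat; assumption). nra.
Qed.

Lemma m_strict b c q : 0 < b -> b < c -> (0 < q)%nat ->
  mm b c 1 * mm b c q < mm b c 0 * mm b c (S q).
Proof.
  intros Hb Hc Hq.
  pose proof (ratio_mono_strict (fun k => mm b c k) (fun k => mm b c (q + k))) as R.
  simpl in R. rewrite !Nat.add_0_r in R. specialize (R ltac:(intro; apply mm_pos; lra) ltac:(intro; apply mm_pos; lra)).
  replace (S q) with (q + 1)%nat by lia. apply R.
  intro l. rewrite !Nat.add_succ_r, !mm_S by lra.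
    pose proof (mm_pos b c l ltac:(lra) ltac:(lra)). pose proof (mm_pos b c (q+l) ltac:(lra) ltac:(lra)).
    pose proof (frac_lt b c l (q+l) Hb Hc ltac:(lia)).
    set (r1 := (b + INR l) / (c + INR l)) in *.
    set (r2 := (b + INR (q + l)) / (c + INR (q + l))) in *.
    set (X := mm b c l) in *. set (Y := mm b c (q + l)) in *.
    assert (0 < X * Y) by (apply Rmult_lt_0_compat; assumption). nra.
Qed.


Lemma sum_shift1 (f : nat -> R) n :
  sum_f_R0 f (S n) = f 0%nat + sum_f_R0 (fun i => f (S i)) n.
Proof. rewrite decomp_sum by lia. reflexivity. Qed.

Lemma sum_rev (f : nat -> R) n : sum_f_R0 f n = sum_f_R0 (fun k => f (n - k)%nat) n.
Proof.
  induction n. simpl. reflexivity.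
  rewrite (sum_shift1 (fun k => f (S n - k)%nat)).
  replace (sum_f_R0 (fun i : nat => f (S n - S i)%nat) n) with (sum_f_R0 (fun k => f (n - k)%nat) n).
  2: { apply sum_eq; intros; f_equal. }
  rewrite <- IHn. simpl. lra.
Qed.

Lemma sum_S (f : nat -> R) n : sum_f_R0 f (S n) = sum_f_R0 f n + f (S n).
Proof. reflexivity. Qed.

Lemma sum_triangle (h : nat -> nat -> R) n :
  sum_f_R0 (fun p => sum_f_R0 (fun i => h i p) p) n =
  sum_f_R0 (fun i => sum_f_R0 (fun j => h i (i + j)%nat) (n - i)) n.
Proof.
  induction n. simpl. reflexivity.
  rewrite (sum_S (fun p => sum_f_R0 (fun i => h i p) p)), IHn.
  rewrite (sum_S (fun i => sum_f_R0 (fun j => h i (i + j)%nat) (S n - i))).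
  rewrite Nat.sub_diag. simpl (sum_f_R0 _ 0). rewrite Nat.add_0_r.
  rewrite (sum_S (fun i => h i (S n))).
  replace (sum_f_R0 (fun i => sum_f_R0 (fun j => h i (i + j)%nat) (S n - i)) n)
    with (sum_f_R0 (fun i => sum_f_R0 (fun j => h i (i + j)%nat) (n - i) + h i (S n)) n).
  2: { apply sum_eq; intros i Hi. replace (S n - i)%nat with (S (n - i)) by lia. rewrite sum_S.
       replace (i + S (n - i))%nat with (S n) by lia. reflexivity. }
  rewrite plus_sum. lra.
Qed.

Lemma sum_nonpos (f : nat -> R) n : (forall i, (i <= n)%nat -> f i <= 0) -> sum_f_R0 f n <= 0.
Proof.
  intro H. induction n; simpl. apply H; lia.
  assert (sum_f_R0 f n <= 0) by (apply IHn; intros; apply H; lia).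
  specialize (H (S n) ltac:(lia)). lra.
Qed.

Lemma sum_neg (f : nat -> R) n i0 : (forall i, (i <= n)%nat -> f i <= 0) -> (i0 <= n)%nat -> f i0 < 0 ->
  sum_f_R0 f n < 0.
Proof.
  intros H Hi0 Hf. induction n; simpl.
  - replace i0 with 0%nat in Hf by lia. auto.
  - destruct (Nat.eq_dec i0 (S n)).
    + subst. assert (sum_f_R0 f n <= 0) by (apply sum_nonpos; intros; apply H; lia). lra.
    + assert (sum_f_R0 f n < 0) by (apply IHn; [intros; apply H; lia | lia]).
      specialize (H (S n) ltac:(lia)). lra.
Qed.

Lemma vander x y n : A (x + y) n = sum_f_R0 (fun k => A x k * A y (n - k)%nat) n.
Proof.
  induction n.
  - simpl. rewrite !A_0. lra.
  - assert (Hs : 0 < INR (S n)) by (apply lt_0_INR; lia).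
    apply Rmult_eq_reg_l with (INR (S n)); [| lra].
    rewrite A_S', IHn.
    assert (E1 : sum_f_R0 (fun k => INR k * (A x k * A y (S n - k)%nat)) (S n)
                 = sum_f_R0 (fun i => A x i * (x + INR i) * A y (n - i)%nat) n).
    { rewrite sum_shift1. simpl (INR 0). rewrite Rmult_0_l, Rplus_0_l.
      apply sum_eq. intros i Hi. simpl (S n - S i)%nat.
      rewrite <- Rmult_assoc, A_S'. reflexivity. }
    assert (E2 : sum_f_R0 (fun k => INR (S n - k) * (A x k * A y (S n - k)%nat)) (S n)
                 = sum_f_R0 (fun i => A x i * (A y (n - i)%nat * (y + INR (n - i)))) n).
    { rewrite sum_S. rewrite Nat.sub_diag. simpl (INR 0). rewrite Rmult_0_l, Rplus_0_r.
      apply sum_eq. intros i Hi.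
      replace (S n - i)%nat with (S (n - i)) by lia.
      rewrite <- A_S'. ring. }
    transitivity (sum_f_R0 (fun k => INR k * (A x k * A y (S n - k)%nat)) (S n)
                + sum_f_R0 (fun k => INR (S n - k) * (A x k * A y (S n - k)%nat)) (S n)).
    + rewrite E1, E2, <- plus_sum, Rmult_comm, scal_sum. apply sum_eq. intros i Hi.
      rewrite minus_INR by lia. ring.
    + rewrite <- plus_sum, scal_sum. apply sum_eq. intros i Hi.
      rewrite minus_INR by lia. ring.
Qed.


Section PartA.
Variables a a' b c d : R.
Hypotheses (Ha : 0 < a) (Haa : a < a') (Hb : 0 < b) (Hbc : b < c) (Hd : 0 < d).

Let m := mm b c.
Definition Tm i j q := A d i * (mm b c (i + j) * mm b c q) * (A a j * A a' q - A a' j * A a q).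

Lemma T_pair i j q : Tm i j q + Tm i q j <= 0.
Proof.
  unfold Tm.
  assert (Hdi : 0 < A d i) by (apply A_pos; auto).
  replace (A d i * (mm b c (i + j) * mm b c q) * (A a j * A a' q - A a' j * A a q) +
           A d i * (mm b c (i + q) * mm b c j) * (A a q * A a' j - A a' q * A a j))
    with (A d i * ((A a j * A a' q - A a' j * A a q) * (mm b c (i + j) * mm b c q - mm b c (i + q) * mm b c j)))
    by ring.
  assert (((A a j * A a' q - A a' j * A a q) * (mm b c (i + j) * mm b c q - mm b c (i + q) * mm b c j)) <= 0).
  { destruct (Nat.le_ge_cases j q).
    - pose proof (E_nonneg a a' j q Ha Haa H). pose proof (m_mono b c i j q Hb Hbc H).
      rewrite (Nat.add_comm i j), (Nat.add_comm i q). nra.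
    - pose proof (E_nonneg a a' q j Ha Haa H). pose proof (m_mono b c i q j Hb Hbc H).
      rewrite (Nat.add_comm i j), (Nat.add_comm i q). nra. }
  nra.
Qed.

Lemma T_strict n : (2 <= n)%nat -> Tm 1 0 (n - 1) + Tm 1 (n - 1) 0 < 0.
Proof.
  intro Hn. unfold Tm.
  assert (Hdi : 0 < A d 1) by (apply A_pos; auto).
  replace (A d 1 * (mm b c (1 + 0) * mm b c (n-1)) * (A a 0 * A a' (n-1) - A a' 0 * A a (n-1)) +
           A d 1 * (mm b c (1 + (n-1)) * mm b c 0) * (A a (n-1) * A a' 0 - A a' (n-1) * A a 0))
    with (A d 1 * ((A a 0 * A a' (n-1) - A a' 0 * A a (n-1)) * (mm b c 1 * mm b c (n-1) - mm b c (S (n-1)) * mm b c 0)))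
    by (simpl; ring).
  replace (n - 1)%nat with (S (n - 2)) by lia.
  pose proof (E_pos a a' (n-2) Ha Haa).
  pose proof (m_strict b c (S (n-2)) Hb Hbc ltac:(lia)).
  assert ((A a 0 * A a' (S (n - 2)) - A a' 0 * A a (S (n - 2))) * (mm b c 1 * mm b c (S (n - 2)) - mm b c (S (S (n - 2))) * mm b c 0) < 0) by nra.
  nra.
Qed.

Lemma diff_coef_T n : diff_coef a a' b c d n =
  sum_f_R0 (fun i => sum_f_R0 (fun j => Tm i j (n - i - j)%nat) (n - i)) n.
Proof.
  unfold diff_coef, cauchy_coef. rewrite <- minus_sum.
  set (h := fun i p => A d i * (mm b c p * mm b c (n - p)) *
        (A a (p - i) * A a' (n - p) - A a' (p - i) * A a (n - p))).
  transitivity (sum_f_R0 (fun i => sum_f_R0 (fun j => h i (i + j)%nat) (n - i)) n).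
  - rewrite <- sum_triangle. apply sum_eq. intros p Hp.
    rewrite !hyp_coef_A by lra.
    rewrite (Rplus_comm a d), (Rplus_comm a' d), !vander.
    set (S1 := sum_f_R0 (fun k => A d k * A a (p - k)%nat) p).
    set (S2 := sum_f_R0 (fun k => A d k * A a' (p - k)%nat) p).
    transitivity (S1 * (mm b c p * (A a' (n - p) * mm b c (n - p))) - S2 * (mm b c p * (A a (n - p) * mm b c (n - p)))).
    { ring. }
    unfold S1, S2. rewrite !(Rmult_comm (sum_f_R0 _ _)), !scal_sum, <- minus_sum.
    apply sum_eq. intros i Hi. unfold h. ring.
  - apply sum_eq. intros i Hi. apply sum_eq. intros j Hj. unfold h, Tm.
    replace (i + j - i)%nat with j by lia. replace (n - (i + j))%nat with (n - i - j)%nat by lia. ring.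
Qed.

Lemma partA_neg n : (2 <= n)%nat -> diff_coef a a' b c d n < 0.
Proof.
  intro Hn. rewrite diff_coef_T.
  apply Rmult_lt_reg_l with 2; [lra|]. rewrite Rmult_0_r, scal_sum.
  apply sum_neg with (i0 := 1%nat); [ | lia | ].
  - intros i Hi.
    assert (Hr := sum_rev (fun j => Tm i j (n - i - j)%nat) (n - i)). simpl in Hr.
    replace (sum_f_R0 (fun j => Tm i j (n - i - j)%nat) (n - i) * 2) with
      (sum_f_R0 (fun j => Tm i j (n - i - j)%nat) (n - i) + sum_f_R0 (fun j => Tm i j (n - i - j)%nat) (n - i)) by ring.
    rewrite Hr at 2. rewrite <- plus_sum. apply sum_nonpos. intros j Hj.
    replace (n - i - (n - i - j))%nat with j by lia. apply T_pair.
  - assert (Hr := sum_rev (fun j => Tm 1 j (n - 1 - j)%nat) (n - 1)). simpl in Hr.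
    replace (sum_f_R0 (fun j => Tm 1 j (n - 1 - j)%nat) (n - 1) * 2) with
      (sum_f_R0 (fun j => Tm 1 j (n - 1 - j)%nat) (n - 1) + sum_f_R0 (fun j => Tm 1 j (n - 1 - j)%nat) (n - 1)) by ring.
    rewrite Hr at 2. rewrite <- plus_sum. apply sum_neg with (i0 := 0%nat); [ | lia | ].
    + intros j Hj. replace (n - 1 - (n - 1 - j))%nat with j by lia. apply T_pair.
    + replace (n - 1 - (n - 1 - 0))%nat with 0%nat by lia. rewrite Nat.sub_0_r. apply T_strict; auto.
Qed.

Lemma partA_01 : diff_coef a a' b c d 0 = 0 /\ diff_coef a a' b c d 1 = 0.
Proof.
  unfold diff_coef, cauchy_coef. simpl. rewrite !hyp_coef_A by lra.
  rewrite !A_S, !A_0, !mm_S, !mm_0 by lra. simpl. split; field; lra.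
Qed.

End PartA.


Fixpoint fall (x : R) (k : nat) : R :=
  match k with O => 1 | S k' => fall x k' * (x - INR k') end.

Lemma fall_fact k i : fall (INR (k + i)) k * INR (fact i) = INR (fact (k + i)).
Proof.
  revert i. induction k; intro i.
  - simpl. ring.
  - replace (S k + i)%nat with (k + S i)%nat by lia. simpl fall.
    specialize (IHk (S i)). rewrite fact_simpl, mult_INR in IHk.
    replace (INR (k + S i) - INR k) with (INR (S i)) by (rewrite plus_INR; ring).
    rewrite <- IHk. ring.
Qed.

Lemma fall_zero j k : (j < k)%nat -> fall (INR j) k = 0.
Proof.
  induction k; intro H. lia. simpl.
  destruct (Nat.eq_dec j k). subst. ring. rewrite IHk by lia. ring.
Qed.

Lemma fall_pos N k : (k <= N)%nat -> 0 < fall (INR N) k.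
Proof.
  induction k; intro H; simpl. lra.
  apply Rmult_lt_0_compat. apply IHk; lia. apply lt_INR in H. lra.
Qed.

Lemma poch_add x k i : poch x (k + i) = poch x k * poch (x + INR k) i.
Proof.
  induction i; simpl. rewrite Nat.add_0_r. ring.
  rewrite Nat.add_succ_r. simpl. rewrite IHi, plus_INR. ring.
Qed.

Lemma A_fall x k i : A x (k + i) * fall (INR (k + i)) k = poch x k * A (x + INR k) i.
Proof.
  unfold A. rewrite poch_add. rewrite <- (fall_fact k i).
  pose proof (INR_fact_pos i). pose proof (fall_pos (k + i) k ltac:(lia)).
  field. lra.
Qed.

Lemma sum_zero (F : nat -> R) n : (forall j, (j <= n)%nat -> F j = 0) -> sum_f_R0 F n = 0.
Proof.
  intro H. induction n; simpl. apply H; lia. rewrite IHn by (intros; apply H; lia). rewrite H by lia. ring.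
Qed.

Lemma sum_zero_prefix (F : nat -> R) k N : (forall j, (j < k)%nat -> F j = 0) -> (k <= N)%nat ->
  sum_f_R0 F N = sum_f_R0 (fun i => F (k + i)%nat) (N - k).
Proof.
  intros H HkN. replace N with (k + (N - k))%nat at 1 by lia. generalize (N - k)%nat as M. intro M.
  induction M.
  - change (sum_f_R0 (fun i => F (k+i)%nat) 0) with (F (k+0)%nat). rewrite !Nat.add_0_r.
    destruct k; [reflexivity|].
    rewrite sum_S, sum_zero; [ring| intros; apply H; lia].
  - rewrite Nat.add_succ_r, sum_S, IHM. rewrite sum_S, Nat.add_succ_r. reflexivity.
Qed.

Lemma sum_mul_l (f : nat -> R) x n : sum_f_R0 (fun i => x * f i) n = x * sum_f_R0 f n.
Proof. rewrite scal_sum. apply sum_eq; intros; ring. Qed.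
Lemma sum_mul_r (f : nat -> R) x n : sum_f_R0 (fun i => f i * x) n = sum_f_R0 f n * x.
Proof. rewrite Rmult_comm, scal_sum. reflexivity. Qed.

Section Beta.
Variables b c : R.
Hypotheses (Hb : 0 < b) (Hbc : b < c).

Definition pw (N j : nat) := A b j * A (c - b) (N - j) / A c N.
Definition uu (N j : nat) := INR j / INR N.
Definition Mom (N k : nat) := sum_f_R0 (fun j => pw N j * uu N j ^ k) N.

Lemma pw_nonneg N j : 0 <= pw N j.
Proof. unfold pw. left. apply Rdiv_lt_0_compat. apply Rmult_lt_0_compat; apply A_pos; lra. apply A_pos; lra. Qed.

Lemma pw_sum N : sum_f_R0 (pw N) N = 1.
Proof.
  unfold pw. pose proof (A_pos c N ltac:(lra)).
  assert (E := vander b (c - b) N). replace (b + (c - b)) with c in E by ring.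
  unfold Rdiv. rewrite sum_mul_r, <- E. field. lra.
Qed.

Lemma moment N k : (k <= N)%nat ->
  sum_f_R0 (fun j => pw N j * (fall (INR j) k / fall (INR N) k)) N = mm b c k.
Proof.
  intro HkN.
  pose proof (A_pos c N ltac:(lra)) as HAc. pose proof (fall_pos N k HkN) as Hf.
  transitivity (sum_f_R0 (fun j => A b j * A (c - b) (N - j) * fall (INR j) k) N * / (A c N * fall (INR N) k)).
  { rewrite <- sum_mul_r. apply sum_eq. intros j Hj. unfold pw. field. lra. }
  rewrite sum_zero_prefix with (k := k) by (auto; intros j Hj; rewrite fall_zero by auto; ring).
  transitivity (sum_f_R0 (fun i => poch b k * (A (b + INR k) i * A (c - b) (N - k - i))) (N - k) * / (A c N * fall (INR N) k)).
  { f_equal. apply sum_eq. intros i Hi. rewrite (Rmult_comm (A b (k+i))), Rmult_assoc, A_fall.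
    replace (N - (k + i))%nat with (N - k - i)%nat by lia. ring. }
  rewrite sum_mul_l, <- vander.
  replace (A c N * fall (INR N) k) with (poch c k * A (c + INR k) (N - k)).
  2: { rewrite <- (A_fall c k (N - k)). replace (k + (N - k))%nat with N by lia. reflexivity. }
  replace (b + INR k + (c - b)) with (c + INR k) by ring.
  unfold mm. pose proof (poch_pos c k ltac:(lra)). pose proof (A_pos (c + INR k) (N - k) ltac:(pose proof (pos_INR k); lra)).
  field. lra.
Qed.
End Beta.

Lemma frac_cmp a b c d : 0 < b -> 0 < d -> a * d <= c * b -> a / b <= c / d.
Proof.
  intros Hb Hd H. replace (a / b) with (a * d * / (b * d)) by (field; lra).
  replace (c / d) with (c * b * / (b * d)) by (field; lra).
  apply Rmult_le_compat_r; auto. left; apply Rinv_0_lt_compat; nra.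
Qed.

Lemma fall_bound N j k : (1 <= N)%nat -> (j <= N)%nat -> (k <= N)%nat ->
  0 <= fall (INR j) k / fall (INR N) k <= (INR j / INR N) ^ k /\
  (INR j / INR N) ^ k - fall (INR j) k / fall (INR N) k <= INR k ^ 2 / INR N.
Proof.
  intros HN HjN. induction k; intro HkN.
  - simpl fall. simpl pow. replace (INR 0) with 0 by reflexivity. unfold Rdiv. rewrite Rinv_1. split; [split|]; nra.
  - specialize (IHk ltac:(lia)).
    pose proof (le_INR _ _ HN) as HN'. simpl (INR 1) in HN'.
    pose proof (le_INR _ _ HjN) as HjN'. pose proof (pos_INR j) as Hj0.
    pose proof (pos_INR k) as Hk0. assert (HkN' : INR k + 1 <= INR N) by (rewrite <- S_INR; apply le_INR; lia).
    set (u := INR j / INR N).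
    assert (Hu : 0 <= u <= 1).
    { unfold u; split. apply Rdiv_le_0_compat; lra. apply Rmult_le_reg_r with (INR N); [lra|].
      unfold Rdiv. rewrite Rmult_assoc, Rinv_l by lra. lra. }
    assert (Huk : 0 <= u ^ k <= 1) by (split; [apply pow_le; lra | rewrite <- (pow1 k); apply pow_incr; lra]).
    rewrite S_INR.
    destruct (Compare_dec.le_lt_dec k j) as [Hkj | Hkj].
    + apply le_INR in Hkj.
      set (R0 := fall (INR j) k / fall (INR N) k) in *.
      assert (HR : fall (INR j) (S k) / fall (INR N) (S k) = R0 * ((INR j - INR k) / (INR N - INR k))).
      { unfold R0. simpl fall. pose proof (fall_pos N k ltac:(lia)). field. lra. }
      rewrite HR. set (t := (INR j - INR k) / (INR N - INR k)).
      assert (Ht : 0 <= t <= u).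
      { unfold t, u. split. apply Rdiv_le_0_compat; lra.
        apply frac_cmp; nra. }
      assert (Hut : u - t <= INR k / INR N).
      { unfold t, u. replace (INR j / INR N - (INR j - INR k) / (INR N - INR k)) with
          (INR k * (INR N - INR j) / (INR N * (INR N - INR k))) by (field; lra).
        assert (0 <= INR k * INR N * (INR j - INR k)) by (apply Rmult_le_pos; [apply Rmult_le_pos|]; lra).
        apply frac_cmp; nra. }
      simpl pow. change (INR j / INR N) with u in IHk. destruct IHk as [[HR1 HR2] HR3].
      split; [split|].
      * apply Rmult_le_pos; lra.
      * rewrite (Rmult_comm u). apply Rmult_le_compat; lra.
      * assert (u * u ^ k - R0 * t = u * (u ^ k - R0) + R0 * (u - t)) by ring.
        assert (u * (u ^ k - R0) <= u ^ k - R0) by nra.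
        assert (R0 * (u - t) <= u - t) by nra.
        assert (INR k ^ 2 / INR N + INR k / INR N <= (INR k + 1) * ((INR k + 1) * 1) / INR N).
        { unfold Rdiv. rewrite <- Rmult_plus_distr_r. apply Rmult_le_compat_r. left; apply Rinv_0_lt_compat; lra. nra. }
        lra.
    + rewrite (fall_zero j (S k)) by lia. unfold Rdiv. rewrite Rmult_0_l.
      apply lt_INR in Hkj.
      split; [split|]. lra. apply pow_le; lra.
      rewrite Rminus_0_r. simpl pow.
      assert (u * u ^ k <= u) by nra.
      assert (u <= (INR k + 1) * ((INR k + 1) * 1) * / INR N).
      { unfold u, Rdiv. apply Rmult_le_compat_r. left; apply Rinv_0_lt_compat; lra. nra. }
      lra.
Qed.

Lemma mm_le1 b c k : 0 < b -> b < c -> mm b c k <= 1.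
Proof.
  intros Hb Hc. unfold mm. assert (poch b k <= poch c k).
  { induction k; simpl. lra. apply Rmult_le_compat; try lra.
    left; apply poch_pos; auto. pose proof (pos_INR k); lra. }
  pose proof (poch_pos c k ltac:(lra)). apply Rmult_le_reg_r with (poch c k); auto.
  unfold Rdiv. rewrite Rmult_assoc, Rinv_l by lra. lra.
Qed.

Lemma sum_nonneg_aux (f : nat -> R) n : (forall i, (i <= n)%nat -> 0 <= f i) -> 0 <= sum_f_R0 f n.
Proof.
  intro H. induction n; simpl. apply H; lia.
  assert (0 <= sum_f_R0 f n) by (apply IHn; intros; apply H; lia). specialize (H (S n) ltac:(lia)). lra.
Qed.

Lemma Mom_diff b c N k : 0 < b -> b < c -> (1 <= N)%nat ->
  Rabs (mm b c k - Mom b c N k) <= INR k ^ 2 / INR N.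
Proof.
  intros Hb Hc HN.
  pose proof (le_INR _ _ HN) as HN'. simpl (INR 1) in HN'.
  destruct (Compare_dec.le_lt_dec k N) as [HkN | HkN].
  - rewrite <- (moment b c Hb Hc N k HkN). unfold Mom. rewrite <- minus_sum.
    assert (Hs : sum_f_R0 (fun j => pw b c N j * (INR k ^ 2 / INR N)) N = INR k ^ 2 / INR N).
    { rewrite sum_mul_r, pw_sum by auto. ring. }
    apply Rabs_le. split.
    + assert (Hs' : sum_f_R0 (fun j => pw b c N j * (- (INR k ^ 2 / INR N))) N = - (INR k ^ 2 / INR N))
        by (rewrite sum_mul_r, pw_sum by auto; ring).
      rewrite <- Hs'. apply sum_Rle. intros j Hj. pose proof (pw_nonneg b c Hb Hc N j).
      destruct (fall_bound N j k HN Hj HkN) as [[H1 H2] H3]. unfold uu. nra.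
    + apply Rle_trans with 0; [| apply Rdiv_le_0_compat; [apply pow_le, pos_INR | lra]].
      apply sum_nonpos. intros j Hj. pose proof (pw_nonneg b c Hb Hc N j).
      destruct (fall_bound N j k HN Hj HkN) as [[H1 H2] H3]. unfold uu. nra.
  - assert (Hu : forall j, (j <= N)%nat -> 0 <= uu N j ^ k <= 1).
    { intros j Hj. unfold uu. apply le_INR in Hj. pose proof (pos_INR j).
      assert (0 <= INR j / INR N <= 1).
      { split. apply Rdiv_le_0_compat; lra. apply Rmult_le_reg_r with (INR N); [lra|].
        unfold Rdiv. rewrite Rmult_assoc, Rinv_l by lra. lra. }
      split. apply pow_le; lra. rewrite <- (pow1 k). apply pow_incr; lra. }
    assert (HM : 0 <= Mom b c N k <= 1).
    { unfold Mom. split.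
      - apply sum_nonneg_aux. intros j Hj. apply Rmult_le_pos. apply pw_nonneg; auto. apply Hu; auto.
      - rewrite <- (pw_sum b c Hb Hc N). apply sum_Rle. intros j Hj.
        pose proof (pw_nonneg b c Hb Hc N j). pose proof (Hu j Hj). nra. }
    pose proof (mm_le1 b c k Hb Hc). pose proof (mm_pos b c k Hb ltac:(lra)).
    apply lt_INR in HkN.
    assert (1 <= INR k ^ 2 / INR N).
    { apply Rmult_le_reg_r with (INR N); [lra|]. unfold Rdiv. rewrite Rmult_assoc, Rinv_l by lra. nra. }
    apply Rabs_le. lra.
Qed.


Lemma poch_abs x k : Rabs (poch x k) <= poch (Rabs x + 1) k.
Proof.
  induction k; simpl.
  - rewrite Rabs_R1; lra.
  - rewrite Rabs_mult. pose proof (pos_INR k).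
    assert (Rabs (x + INR k) <= Rabs x + 1 + INR k).
    { pose proof (Rabs_triang x (INR k)). rewrite (Rabs_right (INR k)) in H0 by lra. lra. }
    apply Rmult_le_compat; auto; apply Rabs_pos.
Qed.

Lemma A_abs x k : Rabs (A x k) <= A (Rabs x + 1) k.
Proof.
  unfold A, Rdiv. rewrite Rabs_mult, Rabs_inv, (Rabs_right (INR _)).
  2: { left; apply INR_fact_pos. }
  apply Rmult_le_compat_r. left; apply Rinv_0_lt_compat, INR_fact_pos. apply poch_abs.
Qed.

Lemma lim_inv_S : is_lim_seq (fun n => / INR (S n)) 0.
Proof.
  assert (H : is_lim_seq (fun n => INR (S n)) p_infty).
  { apply (is_lim_seq_incr_1 INR). apply is_lim_seq_INR. }
  apply is_lim_seq_inv in H; [|discriminate]. exact H.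
Qed.

Lemma lim_eq (u : nat -> R) (l l' : R) : is_lim_seq u l -> l = l' -> is_lim_seq u l'.
Proof. intros H e; subst; exact H. Qed.

Definition dom (be rho : R) (k : nat) := (INR k + 1) ^ 2 * A be k * rho ^ k.

Lemma dom_ex be rho : 0 < be -> 0 < rho < 1 -> ex_series (dom be rho).
Proof.
  intros Hbe Hr.
  assert (Hpos : forall k, 0 < dom be rho k).
  { intro k. unfold dom. pose proof (pos_INR k). apply Rmult_lt_0_compat. apply Rmult_lt_0_compat.
    apply pow_lt; lra. apply A_pos; auto. apply pow_lt; lra. }
  apply ex_series_ext with (fun k => Rabs (dom be rho k)).
  { intro; apply Rabs_right, Rle_ge, Rlt_le, Hpos. }
  apply ex_series_DAlembert with rho. lra.
  { intro n; specialize (Hpos n); lra. }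
  apply is_lim_seq_ext with (fun n => (1 + / INR (S n)) ^ 2 * (1 + (be - 1) * / INR (S n)) * rho).
  { intro n. rewrite Rabs_right.
    2: { left. apply Rdiv_lt_0_compat; auto. }
    unfold dom. rewrite A_S. rewrite S_INR. simpl pow.
    pose proof (pos_INR n). pose proof (A_pos be n Hbe).
    field. repeat split; try lra. apply pow_nonzero; lra. }
  assert (L1 : is_lim_seq (fun n => 1 + / INR (S n)) 1).
  { apply lim_eq with (1 + 0); [|ring]. apply is_lim_seq_plus'. apply is_lim_seq_const. apply lim_inv_S. }
  assert (L2 : is_lim_seq (fun n => 1 + (be - 1) * / INR (S n)) 1).
  { apply lim_eq with (1 + (be - 1) * 0); [|ring]. apply is_lim_seq_plus'. apply is_lim_seq_const.
    apply is_lim_seq_mult'. apply is_lim_seq_const. apply lim_inv_S. }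
  assert (L3 := is_lim_seq_mult' _ _ _ _ (is_lim_seq_mult' _ _ _ _ (is_lim_seq_mult' _ _ _ _ L1 L1) L2) (is_lim_seq_const rho)).
  replace (1 * 1 * 1 * rho) with rho in L3 by ring.
  apply is_lim_seq_ext with (2 := L3). intro n. simpl. ring.
Qed.

Lemma ex_series_dom (f : nat -> R) be rho : 0 < be -> 0 < rho < 1 ->
  (forall k, Rabs (f k) <= dom be rho k) -> ex_series (fun k => Rabs (f k)).
Proof.
  intros Hb Hr H. apply (@ex_series_le R_AbsRing R_CompleteNormedModule) with (dom be rho); [|apply dom_ex; auto].
  intro n. change (norm (Rabs (f n))) with (Rabs (Rabs (f n))). rewrite Rabs_Rabsolu. apply H.
Qed.

Lemma pow_le_rho (z rho : R) k : Rabs z <= rho -> Rabs (z ^ k) <= rho ^ k.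
Proof. intro H. rewrite <- RPow_abs. apply pow_incr. split; auto; apply Rabs_pos. Qed.

Lemma term_dom al z k : Rabs z < 1 ->
  Rabs (A al k * z ^ k) <= dom (Rabs al + 1) ((1 + Rabs z) / 2) k /\
  INR k ^ 2 * Rabs (A al k * z ^ k) <= dom (Rabs al + 1) ((1 + Rabs z) / 2) k.
Proof.
  intro Hz. unfold dom. rewrite Rabs_mult.
  pose proof (A_abs al k). pose proof (pow_le_rho z ((1 + Rabs z)/2) k ltac:(lra)).
  pose proof (Rabs_pos (A al k)). pose proof (Rabs_pos (z ^ k)). pose proof (pos_INR k).
  assert (X : Rabs (A al k) * Rabs (z ^ k) <= A (Rabs al + 1) k * ((1 + Rabs z) / 2) ^ k)
    by (apply Rmult_le_compat; auto).
  assert (1 <= (INR k + 1) ^ 2) by nra. assert (INR k ^ 2 <= (INR k + 1) ^ 2) by nra.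
  assert (0 <= Rabs (A al k) * Rabs (z ^ k)) by nra.
  split; nra.
Qed.

Lemma G_abs al z : Rabs z < 1 -> ex_series (fun k => Rabs (A al k * z ^ k)).
Proof.
  intro Hz. apply ex_series_dom with (Rabs al + 1) ((1 + Rabs z) / 2).
  pose proof (Rabs_pos al); lra. pose proof (Rabs_pos z); lra.
  intro k. apply (term_dom al z k Hz).
Qed.

Lemma G_abs2 al z : Rabs z < 1 -> ex_series (fun k => INR k ^ 2 * Rabs (A al k * z ^ k)).
Proof.
  intro Hz. apply ex_series_ext with (fun k => Rabs (INR k ^ 2 * Rabs (A al k * z ^ k))).
  { intro k. rewrite Rabs_right; auto. apply Rle_ge, Rmult_le_pos. apply pow_le, pos_INR. apply Rabs_pos. }
  apply ex_series_dom with (Rabs al + 1) ((1 + Rabs z) / 2).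
  pose proof (Rabs_pos al); lra. pose proof (Rabs_pos z); lra.
  intro k. rewrite Rabs_right. apply (term_dom al z k Hz).
  apply Rle_ge, Rmult_le_pos. apply pow_le, pos_INR. apply Rabs_pos.
Qed.

Definition G (z al : R) := Series (fun k => A al k * z ^ k).

Lemma G_mult z al be : Rabs z < 1 -> G z al * G z be = G z (al + be).
Proof.
  intro Hz. unfold G.
  assert (H := is_series_mult (fun k => A al k * z ^ k) (fun k => A be k * z ^ k) _ _
    (Series_correct _ (ex_series_Rabs _ (G_abs al z Hz)))
    (Series_correct _ (ex_series_Rabs _ (G_abs be z Hz)))
    (G_abs al z Hz) (G_abs be z Hz)).
  symmetry. apply is_series_unique. apply is_series_ext with (2 := H).
  intro n. rewrite vander, (Rmult_comm (sum_f_R0 _ _)), scal_sum. apply sum_eq. intros i Hi.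
  replace (z ^ n) with (z ^ i * z ^ (n - i)) by (rewrite <- pow_add; f_equal; lia). ring.
Qed.


Lemma Rabs_le_inv x e : Rabs x <= e -> - e <= x <= e.
Proof. intro H. split. pose proof (Rle_abs (- x)). rewrite Rabs_Ropp in H0. lra. pose proof (Rle_abs x). lra. Qed.

Lemma ex_dom (f g : nat -> R) : (forall k, Rabs (f k) <= g k) -> ex_series g -> ex_series (fun k => Rabs (f k)).
Proof.
  intros H Hg. apply (@ex_series_le R_AbsRing R_CompleteNormedModule) with g; auto.
  intro n. change (norm (Rabs (f n))) with (Rabs (Rabs (f n))). rewrite Rabs_Rabsolu. apply H.
Qed.

Lemma ex_series_sum (f : nat -> nat -> R) n : (forall j, (j <= n)%nat -> ex_series (f j)) ->
  ex_series (fun k => sum_f_R0 (fun j => f j k) n).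
Proof.
  intro H. induction n; simpl. apply H; lia.
  apply (ex_series_plus (V := R_NormedModule)). apply IHn; intros; apply H; lia. apply H; lia.
Qed.

Lemma sum_series (f : nat -> nat -> R) n : (forall j, (j <= n)%nat -> ex_series (f j)) ->
  sum_f_R0 (fun j => Series (f j)) n = Series (fun k => sum_f_R0 (fun j => f j k) n).
Proof.
  intro H. induction n; simpl. reflexivity.
  rewrite IHn by (intros; apply H; lia). rewrite Series_plus. reflexivity.
  apply ex_series_sum; intros; apply H; lia. apply H; lia.
Qed.

Lemma quad (w u v : nat -> R) p q n :
  sum_f_R0 (fun i => w i * (p * u i + q * v i) ^ 2) n =
  p ^ 2 * sum_f_R0 (fun i => w i * u i * u i) n + 2 * p * q * sum_f_R0 (fun i => w i * u i * v i) n
  + q ^ 2 * sum_f_R0 (fun i => w i * v i * v i) n.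
Proof.
  rewrite <- !sum_mul_l, <- !plus_sum. apply sum_eq. intros; ring.
Qed.

Lemma cauchy_schwarz (w u v : nat -> R) n : (forall i, (i <= n)%nat -> 0 <= w i) ->
  (sum_f_R0 (fun i => w i * u i * v i) n) ^ 2 <=
  sum_f_R0 (fun i => w i * u i * u i) n * sum_f_R0 (fun i => w i * v i * v i) n.
Proof.
  intro Hw.
  set (Au := sum_f_R0 (fun i => w i * u i * u i) n).
  set (B := sum_f_R0 (fun i => w i * u i * v i) n).
  set (C := sum_f_R0 (fun i => w i * v i * v i) n).
  assert (Q : forall p q, 0 <= p ^ 2 * Au + 2 * p * q * B + q ^ 2 * C).
  { intros p q. unfold Au, B, C. rewrite <- quad. apply sum_nonneg_aux. intros i Hi.
    apply Rmult_le_pos. apply Hw; auto. apply pow2_ge_0. }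
  assert (HAu : 0 <= Au) by (specialize (Q 1 0); simpl in Q; lra).
  assert (HC : 0 <= C) by (specialize (Q 0 1); simpl in Q; lra).
  destruct (Rle_lt_or_eq_dec 0 C HC) as [HC' | HC'].
  - specialize (Q C (- B)). simpl in Q.
    assert (0 <= C * (C * Au - B * B)) by nra. simpl.
    assert (0 <= C * Au - B * B) by nra. nra.
  - destruct (Rle_lt_or_eq_dec 0 Au HAu) as [HA' | HA'].
    + specialize (Q (- B) Au). simpl in Q.
      assert (0 <= Au * (Au * C - B * B)) by nra. simpl.
      assert (0 <= Au * C - B * B) by nra. nra.
    + pose proof (Q 1 1). pose proof (Q 1 (-1)). simpl in *.
      assert (B = 0) by nra. rewrite H1, <- HC', <- HA'. lra.
Qed.


Section Core.
Variables b c y : R.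
Hypotheses (Hb : 0 < b) (Hbc : b < c) (Hy : Rabs y < 1).

Definition Hs al := Series (fun k => hyp_coef al b c k * y ^ k).
Definition PN N al := sum_f_R0 (fun j => pw b c N j * G (y * uu N j) al) N.
Definition Dd al := Series (fun k => INR k ^ 2 * Rabs (A al k * y ^ k)).

Lemma uu_01 N j : (1 <= N)%nat -> (j <= N)%nat -> 0 <= uu N j <= 1.
Proof.
  intros HN Hj. unfold uu. apply le_INR in Hj. apply le_INR in HN. simpl in HN. pose proof (pos_INR j).
  split. apply Rdiv_le_0_compat; lra. apply Rmult_le_reg_r with (INR N); [lra|].
  unfold Rdiv. rewrite Rmult_assoc, Rinv_l by lra. lra.
Qed.

Lemma abs_yu N j : (1 <= N)%nat -> (j <= N)%nat -> Rabs (y * uu N j) < 1.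
Proof.
  intros HN Hj. pose proof (uu_01 N j HN Hj). rewrite Rabs_mult, (Rabs_right (uu N j)) by lra.
  pose proof (Rabs_pos y). nra.
Qed.

Lemma PN_series N al : (1 <= N)%nat -> PN N al = Series (fun k => A al k * y ^ k * Mom b c N k).
Proof.
  intro HN. unfold PN, G.
  transitivity (sum_f_R0 (fun j => Series (fun k => pw b c N j * (A al k * (y * uu N j) ^ k))) N).
  { apply sum_eq. intros j Hj. rewrite Series_scal_l. reflexivity. }
  rewrite sum_series.
  - apply Series_ext. intro k. unfold Mom. rewrite <- sum_mul_l. apply sum_eq. intros j Hj.
    rewrite Rpow_mult_distr. ring.
  - intros j Hj. apply ex_series_ext with (fun k => scal (pw b c N j) (A al k * (y * uu N j) ^ k)).
    { intro; reflexivity. }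
    apply (ex_series_scal_l (V := R_NormedModule)). apply ex_series_Rabs. apply G_abs. apply abs_yu; auto.
Qed.

Lemma PN_close N al : (1 <= N)%nat -> Rabs (Hs al - PN N al) <= Dd al / INR N.
Proof.
  intro HN. pose proof (le_INR _ _ HN) as HN'. simpl (INR 1) in HN'.
  rewrite PN_series by auto. unfold Hs.
  rewrite (Series_ext _ (fun k => A al k * y ^ k * mm b c k)) by (intro; rewrite hyp_coef_A by lra; ring).
  set (df := fun k => A al k * y ^ k * (mm b c k - Mom b c N k)).
  assert (Hdf : forall k, Rabs (df k) <= INR k ^ 2 * Rabs (A al k * y ^ k) * / INR N).
  { intro k. unfold df. rewrite Rabs_mult. pose proof (Mom_diff b c N k Hb Hbc HN).
    unfold Rdiv in H. replace (INR k ^ 2 * Rabs (A al k * y ^ k) * / INR N) with (Rabs (A al k * y ^ k) * (INR k ^ 2 * / INR N)) by ring.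
    apply Rmult_le_compat_l. apply Rabs_pos. exact H. }
  assert (Eg : ex_series (fun k => INR k ^ 2 * Rabs (A al k * y ^ k) * / INR N)).
  { apply ex_series_ext with (fun k => scal (/ INR N) (INR k ^ 2 * Rabs (A al k * y ^ k))).
    { intro; unfold scal; simpl; unfold mult; simpl; ring. }
    apply (ex_series_scal_l (V := R_NormedModule)). apply G_abs2; auto. }
  assert (Edf : ex_series (fun k => Rabs (df k))) by (apply ex_dom with (2 := Eg); auto).
  assert (Em : ex_series (fun k => A al k * y ^ k * mm b c k)).
  { apply ex_series_Rabs. apply ex_dom with (g := fun k => Rabs (A al k * y ^ k)); [| apply G_abs; auto].
    intro k. rewrite Rabs_mult. rewrite (Rabs_right (mm b c k)).
    pose proof (mm_le1 b c k Hb Hbc). pose proof (Rabs_pos (A al k * y ^ k)). nra.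
    left; apply mm_pos; lra. }
  assert (EM : ex_series (fun k => A al k * y ^ k * Mom b c N k)).
  { apply ex_series_ext with (fun k => plus (A al k * y ^ k * mm b c k) (opp (df k))).
    { intro k. unfold df, plus, opp; simpl. unfold plus, opp; simpl. ring. }
    apply (ex_series_minus (V := R_NormedModule)); auto. apply ex_series_Rabs; auto. }
  rewrite <- Series_minus by auto.
  rewrite (Series_ext _ df) by (intro; unfold df; ring).
  eapply Rle_trans. apply Series_Rabs; auto.
  eapply Rle_trans. apply Series_le with (b := fun k => INR k ^ 2 * Rabs (A al k * y ^ k) * / INR N); auto.
  { intro; split; [apply Rabs_pos | apply Hdf]. }
  rewrite Series_scal_r. unfold Dd. lra.
Qed.

Lemma PN_lc N al d : (1 <= N)%nat -> PN N (al + d) ^ 2 <= PN N al * PN N (al + 2 * d).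
Proof.
  intro HN. unfold PN.
  assert (E1 : forall j, (j <= N)%nat -> G (y * uu N j) (al + d) = G (y * uu N j) (al / 2) * G (y * uu N j) (al / 2 + d)).
  { intros j Hj. rewrite G_mult by (apply abs_yu; auto). f_equal; field. }
  assert (E2 : forall j, (j <= N)%nat -> G (y * uu N j) al = G (y * uu N j) (al / 2) * G (y * uu N j) (al / 2)).
  { intros j Hj. rewrite G_mult by (apply abs_yu; auto). f_equal; field. }
  assert (E3 : forall j, (j <= N)%nat -> G (y * uu N j) (al + 2 * d) = G (y * uu N j) (al / 2 + d) * G (y * uu N j) (al / 2 + d)).
  { intros j Hj. rewrite G_mult by (apply abs_yu; auto). f_equal; field. }
  rewrite (sum_eq _ (fun j => pw b c N j * G (y * uu N j) (al / 2) * G (y * uu N j) (al / 2 + d))) by (intros j Hj; rewrite E1; auto; ring).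
  rewrite (sum_eq (fun j => pw b c N j * G (y * uu N j) al) (fun j => pw b c N j * G (y * uu N j) (al / 2) * G (y * uu N j) (al / 2))) by (intros j Hj; rewrite E2; auto; ring).
  rewrite (sum_eq (fun j => pw b c N j * G (y * uu N j) (al + 2 * d)) (fun j => pw b c N j * G (y * uu N j) (al / 2 + d) * G (y * uu N j) (al / 2 + d))) by (intros j Hj; rewrite E3; auto; ring).
  apply cauchy_schwarz. intros; apply pw_nonneg; auto.
Qed.

Lemma PN_lim al : is_lim_seq (fun N => PN (S N) al) (Hs al).
Proof.
  apply is_lim_seq_le_le with (u := fun N => Hs al - Dd al * / INR (S N)) (w := fun N => Hs al + Dd al * / INR (S N)).
  - intro N. pose proof (PN_close (S N) al ltac:(lia)). apply Rabs_le_inv in H. unfold Rdiv in H. lra.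
  - apply lim_eq with (Hs al - Dd al * 0); [| ring]. apply is_lim_seq_minus'. apply is_lim_seq_const.
    apply is_lim_seq_mult'. apply is_lim_seq_const. apply lim_inv_S.
  - apply lim_eq with (Hs al + Dd al * 0); [| ring]. apply is_lim_seq_plus'. apply is_lim_seq_const.
    apply is_lim_seq_mult'. apply is_lim_seq_const. apply lim_inv_S.
Qed.

Lemma core al d : Hs (al + d) ^ 2 <= Hs al * Hs (al + 2 * d).
Proof.
  assert (L1 := is_lim_seq_mult' _ _ _ _ (PN_lim (al + d)) (PN_lim (al + d))).
  assert (L2 := is_lim_seq_mult' _ _ _ _ (PN_lim al) (PN_lim (al + 2 * d))).
  replace (Hs (al + d) ^ 2) with (Hs (al + d) * Hs (al + d)) by ring.
  assert (H' : forall N, PN (S N) (al + d) * PN (S N) (al + d) <= PN (S N) al * PN (S N) (al + 2 * d)).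
  { intro N. pose proof (PN_lc (S N) al d ltac:(lia)) as HH. simpl in HH. rewrite Rmult_1_r in HH. exact HH. }
  exact (is_lim_seq_le _ _ _ _ H' L1 L2).
Qed.
End Core.


Theorem theorem7 :
  (forall a a' b c d : R, 0 < a -> a < a' -> 0 < b -> b < c -> 0 < d ->
     diff_coef a a' b c d 0 = 0 /\ diff_coef a a' b c d 1 = 0 /\
     (forall n : nat, (2 <= n)%nat -> diff_coef a a' b c d n < 0))
  /\
  (forall a b c d x : R, 0 < d -> x < 1 -> 0 < b -> b < c ->
     (F21 (a + d) b c x) ^ 2 <= F21 a b c x * F21 (a + 2 * d) b c x).
Proof.
  split.
  - intros a a' b c d Ha Haa Hb Hbc Hd.
    assert (HH : diff_coef a a' b c d 0 = 0 /\ diff_coef a a' b c d 1 = 0) by (apply partA_01; auto).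
    destruct HH as [H0 H1].
    split; [exact H0 | split; [exact H1 |]].
    intros n Hn. apply partA_neg; auto.
  - intros a b c d x Hd Hx Hb Hbc. unfold F21.
    destruct (Rlt_dec (Rabs x) 1) as [Hax | Hax].
    + exact (core b c x Hb Hbc Hax a d).
    + assert (Hx1 : x <= -1).
      { destruct (Rle_dec x (-1)); auto. exfalso. apply Hax. apply Rabs_def1; lra. }
      set (y := x / (x - 1)).
      assert (Hy : Rabs y < 1).
      { assert (0 < y < 1).
        { unfold y. split. apply Rdiv_neg_neg; lra.
          apply Rmult_lt_reg_r with (1 - x); [lra|]. replace (x / (x - 1) * (1 - x)) with (- x) by (field; lra). lra. }
        rewrite Rabs_right; lra. }
      set (P := Rpower (1 - x) (- b)).
      assert (HP : 0 < P) by (unfold P, Rpower; apply exp_pos).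
      pose proof (core b c y Hb Hbc Hy (c - a - 2 * d) d) as Hc.
      unfold Hs in Hc. unfold hyp_series.
      set (al := c - a - 2 * d) in *.
      replace (c - (a + 2 * d)) with al by (unfold al; ring).
      replace (c - (a + d)) with (al + d) by (unfold al; ring).
      replace (c - a) with (al + 2 * d) by (unfold al; ring).
      set (X := Series (fun k => hyp_coef (al + d) b c k * y ^ k)) in *.
      set (Z := Series (fun k => hyp_coef (al + 2 * d) b c k * y ^ k)) in *.
      set (W := Series (fun k => hyp_coef al b c k * y ^ k)) in *.
      assert (0 <= P * P) by nra.
      replace ((P * X) ^ 2) with ((P * P) * X ^ 2) by ring.
      replace (P * Z * (P * W)) with ((P * P) * (W * Z)) by ring.
      apply Rmult_le_compat_l; auto.
Qed.
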